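(* Let $d>0$ and $y_1>0$, and let $S$ be a finite set of points in $\{(x,y):x\ge d\}$ with at least one point on the line $\mathcal{L}'=\{x=d\}$. Define $x^*<0$ as follows: if $S$ has no point $(d,y)$ with $y>y_1$, let $x^*$ be an arbitrary negative number; otherwise let $y_3=\max\{y:(d,y)\in S,\ y>y_1\}$ and $x^*=-\frac{1}{2}\,d\,\frac{y_1}{y_3-y_1}$. Then for every $x\in[x^*,0)$, every $y_1'\ge y_1$ and every $q\in S\cap\mathcal{L}'$: the closed segment from $q$ to $(x,0)$ contains no point of $(S\setminus\{q\})\cup\{(0,y_1')\}$, and the closed segment from $q$ to $(0,y_1')$ contains no point of $(S\setminus\{q\})\cup\{(x,0)\}$. (Interpretation: a robot starting at the origin and moving left horizontally to $(x^*,0)$, while another robot at $(0,y_1)$ stays put or moves upward along the $Y$-axis, never obstructs or is obstructed from the robots on the leftmost line $\mathcal{L}'$ of the remaining robots $S$.)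
   Context: All coordinates are in a fixed Cartesian coordinate system of the plane; ''segment'' means closed line segment. *)

(* Defs.v *)
From Stdlib Require Import Reals List.
Import ListNotations.
Open Scope R_scope.

Definition point := (R * R)%type.

Definition on_segment (a b p : point) : Prop :=
  exists t : R, 0 <= t <= 1 /\
    fst p = fst a + t * (fst b - fst a) /\
    snd p = snd a + t * (snd b - snd a).

(* Main.v *)
Require Import Defs.
From Stdlib Require Import Reals List Lra Psatz.
Import ListNotations.
Open Scope R_scope.

Theorem mainTheorem6 (d y1 xstar : R) (S : list point)
  (Hd : 0 < d) (Hy1 : 0 < y1)
  (HS : forall p, In p S -> d <= fst p)
  (HL : exists q, In q S /\ fst q = d)
  (Hxneg : xstar < 0)
  (Hxdef : (exists y, In (d, y) S /\ y1 < y) ->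
     exists y3, In (d, y3) S /\ y1 < y3 /\
       (forall y, In (d, y) S -> y1 < y -> y <= y3) /\
       xstar = - (1/2) * d * (y1 / (y3 - y1))) :
  forall x, xstar <= x < 0 ->
  forall y1', y1 <= y1' ->
  forall q, In q S -> fst q = d ->
    (forall p, (In p S /\ p <> q) \/ p = (0, y1') -> ~ on_segment q (x, 0) p) /\
    (forall p, (In p S /\ p <> q) \/ p = (x, 0) -> ~ on_segment q (0, y1') p).
Proof.
  intros x [Hx1 Hx2] y1' Hy1' [qx qy] Hq Hqx. simpl in Hqx. subst qx.
  split; intros [px py] Hp [t [Ht [E1 E2]]]; simpl in E1, E2.
  - destruct Hp as [[HpS Hne] | Heq].
    + pose proof (HS _ HpS) as Hf; simpl in Hf.
      assert (t = 0) by nra. subst t. apply Hne. f_equal; lra.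
    + injection Heq as -> ->.
      assert (Hts : (1 - t) * (d - x) = - x) by nra.
      assert (Hy : y1' * (d - x) = qy * (- x)) by (rewrite E2, <- Hts; ring).
      destruct (Rle_dec qy y1) as [Hle | Hgt].
      * nra.
      * destruct Hxdef as [y3 [Hy3S [Hy3 [Hmax Hxs]]]].
        { exists qy. split; [exact Hq | lra]. }
        pose proof (Hmax qy Hq ltac:(lra)) as Hqy3.
        assert (Hxs2 : xstar * (y3 - y1) = -(1/2) * d * y1)
          by (subst xstar; field; lra).
        assert (H1 : (-x) * (y3 - y1) <= d * y1 / 2) by nra.
        assert (H2 : (-x) * (qy - y1) <= (-x) * (y3 - y1)) by nra.
        nra.
  - destruct Hp as [[HpS Hne] | Heq].
    + pose proof (HS _ HpS) as Hf; simpl in Hf.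
      assert (t = 0) by nra. subst t. apply Hne. f_equal; lra.
    + injection Heq as -> ->. nra.
Qed.
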